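(* Assume $C\succ 0$ and $A_1,\dots,A_m$ are linearly independent. Let $X(t)$ be a differentiable solution of the second-ansatz dynamics $$\mathrm{vec}(\dot X) = -\bigl(I - G\mathcal{A}^T(\mathcal{A}G\mathcal{A}^T)^{-1} \mathcal{A}\bigr)G\,\mathrm{vec}(C),\qquad G=X\otimes X.$$ Then at any time $t$ with $X(t)\succ 0$, $$\frac{d}{dt}\ln\det X(t) \ \ge\ -\sqrt{n}\,\mathrm{tr}(CX(t)).$$
   Context: $C,A_1,\dots,A_m$ are symmetric $n\times n$ matrices and $b\in\mathbb{R}^m$. For an $n\times n$ matrix $M$, $\mathrm{vec}(M)\in\mathbb{R}^{n^2}$ is obtained by stacking the columns of $M$; $\otimes$ is the Kronecker product. $\mathcal{A}$ is the $m\times n^2$ matrix whose $\ell$-th row is $\mathrm{vec}(A_\ell)^T$. *)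

(* Defs.v *)
From HB Require Import structures.
From mathcomp Require Import all_boot all_order all_algebra.
From mathcomp Require Import all_classical all_reals all_analysis.
Set Implicit Arguments. Unset Strict Implicit. Unset Printing Implicit Defensive.
Import Order.TTheory GRing.Theory Num.Theory.
Local Open Scope ring_scope.

(* Index arithmetic for 'I_(n*n): k = q*n + r with r = k %% n, q = k %/ n (0-based). *)
Lemma vec_row_lt (n : nat) (k : 'I_(n * n)) : (k %% n < n)%N.
Proof.
case: n k => [|n] k; first by case: k.
by rewrite ltn_pmod.
Qed.

Lemma vec_col_lt (n : nat) (k : 'I_(n * n)) : (k %/ n < n)%N.
Proof.
case: n k => [|n] k; first by case: k.
by rewrite ltn_divLR.
Qed.

Definition vrow (n : nat) (k : 'I_(n * n)) : 'I_n := Ordinal (vec_row_lt k).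
Definition vcol (n : nat) (k : 'I_(n * n)) : 'I_n := Ordinal (vec_col_lt k).

(* vec(M): stacking the columns of M; entry number j*n+i (0-based) is M i j. *)
Definition vec (R : pzRingType) (n : nat) (M : 'M[R]_n) : 'cV[R]_(n * n) :=
  \col_k M (vrow k) (vcol k).

(* Kronecker product: (A ⊗ B)_{(p n + q),(p' n + q')} = A p p' * B q q'. *)
Definition kron (R : pzRingType) (n : nat) (A B : 'M[R]_n) : 'M[R]_(n * n) :=
  \matrix_(k, l) (A (vcol k) (vcol l) * B (vrow k) (vrow l)).

Definition calA (R : pzRingType) (m n : nat) (A : 'I_m -> 'M[R]_n) : 'M[R]_(m, n * n) :=
  \matrix_(l, k) vec (A l) k 0.

Definition posdef (R : numDomainType) (n : nat) (M : 'M[R]_n) : Prop :=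
  M^T = M /\ forall v : 'cV[R]_n, v != 0 -> 0 < (v^T *m M *m v) 0 0.

Definition mxderiv (R : realType) (n : nat) (X : R -> 'M[R]_n) (t : R) : 'M[R]_n :=
  \matrix_(i, j) derive1 (fun s => X s i j) t.

Definition mxderivable (R : realType) (n : nat) (X : R -> 'M[R]_n) (t : R) : Prop :=
  forall i j, derivable (fun s => X s i j) t 1.

Definition ansatz2_rhs (R : realType) (m n : nat) (C : 'M[R]_n) (A : 'I_m -> 'M[R]_n)
  (Xt : 'M[R]_n) : 'cV[R]_(n * n) :=
  let G := kron Xt Xt in
  let cA := calA A in
  - ((1%:M - G *m cA^T *m invmx (cA *m G *m cA^T) *m cA) *m G *m vec C).

(* Main.v *)
Require Import Defs.
From HB Require Import structures.
From mathcomp Require Import all_boot all_order all_algebra.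
From mathcomp Require Import all_classical all_reals all_analysis.
From mathcomp Require Import ring lra.
From mathcomp Require Import perm.
Import Order.TTheory GRing.Theory Num.Theory.
Local Open Scope ring_scope.
Set Implicit Arguments. Unset Strict Implicit. Unset Printing Implicit Defensive.

Section Idx.
Variable n : nat.
Lemma vidx_lt (i j : 'I_n) : (j * n + i < n * n)%N.
Proof.
have hi := ltn_ord i; have hj := ltn_ord j.
apply: (@leq_trans (j.+1 * n)); first by rewrite mulSn [(n + _)%N]addnC ltn_add2l.
by rewrite leq_mul2r hj orbT.
Qed.
Definition vidx (i j : 'I_n) : 'I_(n * n) := Ordinal (vidx_lt i j).
Lemma vrow_vidx i j : vrow (vidx i j) = i.
Proof. apply: val_inj => /=; rewrite modnMDl modn_small //. Qed.
Lemma vcol_vidx i j : vcol (vidx i j) = j.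
Proof.
apply: val_inj => /=; have n0 : (0 < n)%N by case: n i {j} => [[]|].
by rewrite divnMDl // divn_small // addn0.
Qed.
Lemma vidxK k : vidx (vrow k) (vcol k) = k.
Proof. by apply: val_inj => /=; rewrite -divn_eq. Qed.
End Idx.

Lemma sum_vidx (R : nmodType) n (F : 'I_(n * n) -> R) :
  \sum_k F k = \sum_i \sum_j F (vidx i j).
Proof.
rewrite pair_big /=.
rewrite (reindex (fun p : 'I_n * 'I_n => vidx p.1 p.2)) //=.
exists (fun k => (vrow k, vcol k)) => [[i j] _|k _] /=.
  by rewrite vrow_vidx vcol_vidx.
by rewrite vidxK.
Qed.

Lemma vec_dot (R : comPzRingType) n (Z W : 'M[R]_n) :
  ((vec Z)^T *m vec W) 0 0 = \tr (Z^T *m W).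
Proof.
rewrite !mxE sum_vidx /mxtrace exchange_big /=.
apply: eq_bigr => j _; rewrite mxE; apply: eq_bigr => i _.
by rewrite !mxE vrow_vidx vcol_vidx.
Qed.

Lemma kron_vec (R : comPzRingType) n (A B Mx : 'M[R]_n) :
  kron A B *m vec Mx = vec (B *m Mx *m A^T).
Proof.
apply/matrixP => k z; rewrite !mxE sum_vidx exchange_big /=.
apply: eq_bigr => j _; rewrite mxE big_distrl /=; apply: eq_bigr => i _.
rewrite !mxE vrow_vidx vcol_vidx; ring.
Qed.

Lemma kron_tr (R : comPzRingType) n (A B : 'M[R]_n) :
  (kron A B)^T = kron A^T B^T.
Proof. by apply/matrixP => k l; rewrite !mxE. Qed.

Lemma cs_real (R : realFieldType) (a b d : R) :
  (forall l, 0 <= a + 2 * l * b + l ^+ 2 * d) -> 0 <= a -> 0 <= d ->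
  b ^+ 2 <= a * d.
Proof.
move=> H a0 d0.
have [d0e|dn0] := eqVneq d 0.
  rewrite d0e in H *.
  have [->|bn0] := eqVneq b 0; first by rewrite expr0n mulr0.
  have := H (- (a + 1) / (2 * b)).
  have -> : 2 * (- (a + 1) / (2 * b)) * b = - (a + 1) by field; rewrite bn0.
  by rewrite mulr0 addr0 mulr0 => h; lra.
have := H (- (b / d)).
set x := b / d; have hx : d * x = b by rewrite /x; field.
move=> h; nra.
Qed.

Definition qf (R : pzRingType) N (H : 'M[R]_N) (u v : 'cV[R]_N) : R := (u^T *m H *m v) 0 0.

Section QF.
Variables (R : comPzRingType) (N : nat) (H : 'M[R]_N).
Lemma qfDr u v w : qf H u (v + w) = qf H u v + qf H u w.
Proof. by rewrite /qf mulmxDr mxE. Qed.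
Lemma qfZr u a v : qf H u (a *: v) = a * qf H u v.
Proof. by rewrite /qf -scalemxAr mxE. Qed.
Lemma qfDl u v w : qf H (v + w) u = qf H v u + qf H w u.
Proof. by rewrite /qf linearD /= !mulmxDl mxE. Qed.
Lemma qfZl u a v : qf H (a *: v) u = a * qf H v u.
Proof. by rewrite /qf linearZ /= -!scalemxAl mxE. Qed.
Lemma qfC u v : H^T = H -> qf H u v = qf H v u.
Proof.
move=> hH; rewrite /qf.
have -> : (u^T *m H *m v) 0 0 = ((u^T *m H *m v)^T) 0 0 by rewrite [RHS]mxE.
by rewrite !trmx_mul trmxK hH mulmxA.
Qed.
End QF.

Lemma qf_cs (R : realFieldType) N (H : 'M[R]_N) u c :
  H^T = H -> (forall v, 0 <= qf H v v) ->
  qf H u c ^+ 2 <= qf H u u * qf H c c.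
Proof.
move=> hs hp; apply: cs_real; last by []; last by [].
move=> l; have := hp (u + l *: c).
rewrite !(qfDl, qfDr, qfZl, qfZr) (qfC c u hs).
by move=> h; nra.
Qed.

Lemma mx11_mulE (R : pzSemiRingType) (A : 'M[R]_(1,1)) (B : 'M[R]_(1,1)) :
  (A *m B) 0 0 = A 0 0 * B 0 0.
Proof. by rewrite mxE big_ord1. Qed.

Lemma delta_qf (R : pzSemiRingType) n (K : 'M[R]_n) i j :
  ((delta_mx i (0 : 'I_1))^T *m K *m (delta_mx j (0 : 'I_1) : 'cV[R]_n)) 0 0 = K i j.
Proof. by rewrite trmx_delta -rowE -colE !mxE. Qed.

Lemma cholesky (R : realType) n (X : 'M[R]_n) : posdef X -> exists L : 'M[R]_n, X = L *m L^T.
Proof.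
elim: n X => [|n IH] X.
  by move=> _; exists 0; apply/matrixP => [[]].
move=> [hs hp].
pose X' : 'M[R]_(1 + n) := X.
have hX : X' = block_mx (ulsubmx X') (ursubmx X') (dlsubmx X') (drsubmx X') by rewrite submxK.
set ul := ulsubmx X' in hX; set r := ursubmx X' in hX; set dl := dlsubmx X' in hX; set D := drsubmx X' in hX.
have hs' : X'^T = X' by [].
have : block_mx ul^T dl^T r^T D^T = block_mx ul r dl D by rewrite -tr_block_mx -hX.
case/eq_block_mx => _ _ hdl hD.
pose a := ul 0 0.
have hul : ul = a%:M by rewrite [LHS]mx11_scalar.
have a0 : 0 < a.
  have := hp (delta_mx 0 0) _; rewrite delta_qf.
  have -> : a = X 0 0.
    by rewrite /a /ul !mxE; congr fun_of_matrix; apply: val_inj.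
  apply; apply/eqP => /matrixP /(_ 0 0); rewrite !mxE /= => /eqP; by rewrite oner_eq0.
pose S := D - a^-1 *: (r^T *m r).
have hS : posdef S.
  split; first by rewrite /S linearB linearZ /= trmx_mul trmxK hD.
  move=> w wn0.
  pose B := r *m w; pose Q := w^T *m D *m w.
  pose al := - (a^-1 * B 0 0).
  pose v : 'cV[R]_(1 + n) := col_mx (al%:M) w.
  have hv : v != 0 by rewrite col_mx_eq0 negb_and wn0 orbT.
  have := hp v hv; change (0 < (v^T *m X' *m v) 0 0 -> 0 < (w^T *m S *m w) 0 0).
  have e1 : v^T *m X' *m v = al *: (al *: a%:M + B^T) + (al *: B + Q).
    rewrite hX tr_col_mx mul_row_block mul_row_col tr_scalar_mx hul -hdl.
    rewrite !mul_scalar_mx mul_mx_scalar mulmxDl -scalemxAl /Q /B trmx_mul.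
    by rewrite ?mulmxA.
  have e2 : w^T *m S *m w = Q - a^-1 *: (B^T *m B).
    by rewrite /S /Q /B mulmxBr mulmxBl -scalemxAr -scalemxAl trmx_mul !mulmxA.
  rewrite e1 e2 /al; clearbody B Q.
  rewrite !mxE big_ord1 !mxE /= !mulr1n.
  have an0 : a != 0 by rewrite gt_eqF.
  have -> : - (a^-1 * B 0 0) * (- (a^-1 * B 0 0) * a + B 0 0) + (- (a^-1 * B 0 0) * B 0 0 + Q 0 0) = Q 0 0 - a^-1 * (B 0 0 * B 0 0).
    by field.
  by [].
have [L' hL'] := IH S hS.
have a0' : 0 <= a by apply: ltW.
pose s := Num.sqrt a.
have s0 : 0 < s by rewrite sqrtr_gt0.
have sn0 : s != 0 by rewrite gt_eqF.
exists (block_mx (s%:M) 0 (s^-1 *: r^T) L' : 'M[R]_(1 + n)).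
change (X' = block_mx (s%:M) 0 (s^-1 *: r^T) L' *m (block_mx (s%:M) 0 (s^-1 *: r^T) L')^T).
rewrite [LHS]hX tr_block_mx mulmx_block !trmx0 !mulmx0 !addr0 tr_scalar_mx mul0mx addr0.
rewrite linearZ /= trmxK -hL' hul -hdl.
have ss : s * s = a by rewrite -expr2 sqr_sqrtr.
congr block_mx.
- by rewrite -scalar_mxM ss.
- by rewrite mul_scalar_mx scalerA mulfV // scale1r.
- by rewrite mul_mx_scalar scalerA mulfV // scale1r.
- rewrite /S -scalemxAl -scalemxAr scalerA -invfM ss.
  by rewrite addrC subrK.
Qed.

Section Der.
Variable R : realType.

Lemma is_derive_mulc (f : R -> R) (t c df : R) :
  is_derive t 1 f df -> is_derive t 1 (fun s => c * f s) (c * df).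
Proof. move=> h; exact: (is_deriveZ c h). Qed.

Lemma is_derive_bigsum (I : finType) (h : I -> R -> R) (dh : I -> R) (t : R) :
  (forall i, is_derive t 1 (h i) (dh i)) ->
  is_derive t 1 (fun s => \sum_i h i s) (\sum_i dh i).
Proof.
move=> hd; rewrite unlock /=.
elim: (index_enum I) => [|i r IH] /=.
  exact: is_derive_cst.
have -> : (fun s => (if true then h i s + reducebig 0 r (fun j => BigBody j +%R true (h j s)) else reducebig 0 r (fun j => BigBody j +%R true (h j s))))
  = h i + (fun s => reducebig 0 r (fun j => BigBody j +%R true (h j s))) by [].
exact: is_deriveD.
Qed.

Lemma prod_neq_max n (G : 'I_n.+1 -> R) :
  \prod_(i < n.+1 | i != ord_max) G i = \prod_(i < n) G (widen_ord (leqnSn n) i).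
Proof.
rewrite big_mkcond big_ord_recr /= eqxx mulr1; apply: eq_bigr => i _.
suff -> : (widen_ord (leqnSn n) i != ord_max) by [].
by rewrite neq_ltn /= ltn_ord.
Qed.

Lemma prod_neq_widen n (G : 'I_n.+1 -> R) (k : 'I_n) :
  \prod_(i < n.+1 | i != widen_ord (leqnSn n) k) G i =
  (\prod_(i < n | i != k) G (widen_ord (leqnSn n) i)) * G ord_max.
Proof.
rewrite big_mkcond big_ord_recr /= [in RHS]big_mkcond.
have -> : (ord_max != widen_ord (leqnSn n) k) by rewrite neq_ltn /= ltn_ord orbT.
congr (_ * _); apply: eq_bigr => i _ //.
Qed.

Lemma is_derive_bigprod n (F : 'I_n -> R -> R) (dF : 'I_n -> R) (t : R) :
  (forall i, is_derive t 1 (F i) (dF i)) ->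
  is_derive t 1 (fun s => \prod_i F i s) (\sum_k dF k * \prod_(i | i != k) F i t).
Proof.
elim: n F dF => [|n IH] F dF hd.
  have -> : (fun s => \prod_(i < 0) F i s) = cst 1 by apply/funext => s; rewrite big_ord0.
  rewrite big_ord0; exact: is_derive_cst.
have -> : (fun s => \prod_(i < n.+1) F i s) =
  (fun s => \prod_(i < n) F (widen_ord (leqnSn n) i) s) * F ord_max.
  by apply/funext => s; rewrite big_ord_recr.
have hIH := IH (fun i => F (widen_ord (leqnSn n) i)) (fun i => dF (widen_ord (leqnSn n) i)) (fun i => hd _).
have hm := hd ord_max.
apply: is_derive_eq.
rewrite [RHS]big_ord_recr /= addrC prod_neq_max; congr (_ + _).
  by rewrite mulrC.
rewrite scaler_sumr; apply: eq_bigr => k _.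
rewrite prod_neq_widen -[_ *: _]/(_ * _) /=.
by rewrite mulrCA; congr (_ * _); rewrite mulrC.
Qed.

Lemma det_row_repl n (X Y : 'M[R]_n) k :
  \det (\matrix_(i, j) if i == k then Y i j else X i j) =
  \sum_j Y k j * cofactor X k j.
Proof.
rewrite (expand_det_row _ k); apply: eq_bigr => j _.
rewrite mxE eqxx; congr (_ * _); rewrite /cofactor; congr (_ * \det _).
apply/matrixP => a b; rewrite !mxE.
by rewrite eq_sym (negbTE (neq_lift _ _)).
Qed.

Lemma det_row_repl2 n (X Y : 'M[R]_n) k :
  \det (\matrix_(i, j) if i == k then Y i j else X i j) =
  \sum_(s : 'S_n) (-1) ^+ s * (Y k (s k) * \prod_(i | i != k) X i (s i)).
Proof.
rewrite /determinant; apply: eq_bigr => s _; congr (_ * _).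
rewrite (bigD1 k) //= mxE eqxx; congr (_ * _); apply: eq_bigr => i hi.
by rewrite mxE (negbTE hi).
Qed.

Lemma is_derive_det n (X : R -> 'M[R]_n) t : mxderivable X t ->
  is_derive t 1 (fun s => \det (X s)) (\tr (mxderiv X t *m \adj (X t))).
Proof.
move=> hX.
have hd i j : is_derive t 1 (fun s => X s i j) (mxderiv X t i j).
  by rewrite mxE derive1E; apply: derivableP.
apply: is_derive_eq.
  apply: is_derive_bigsum => s.
  apply: is_derive_mulc.
  exact: (is_derive_bigprod (F := fun i s0 => X s0 i (s i)) (dF := fun i => mxderiv X t i (s i)) (fun i => hd i (s i))).
rewrite /= /mxtrace.
under [RHS]eq_bigr => k _ do rewrite mxE.
have -> : \sum_k \sum_j mxderiv X t k j * \adj (X t) j k =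
  \sum_k \det (\matrix_(i, j) if i == k then mxderiv X t i j else X t i j).
  apply: eq_bigr => k _; rewrite det_row_repl; apply: eq_bigr => j _.
  by rewrite [\adj _ _ _]mxE.
under [RHS]eq_bigr => k _ do rewrite det_row_repl2.
rewrite exchange_big /=; apply: eq_bigr => s _.
by rewrite mulr_sumr.
Qed.

Lemma derive_lndet n (X : R -> 'M[R]_n) t : mxderivable X t -> 0 < \det (X t) ->
  derive1 (fun s => ln (\det (X s))) t = (\det (X t))^-1 * \tr (mxderiv X t *m \adj (X t)).
Proof.
move=> hX hpos.
have hd := is_derive_det hX.
have hl := is_derive1_ln hpos.
have d1 : derivable (fun s => \det (X s)) t 1 := @ex_derive _ _ _ _ _ _ _ hd.
have d2 : derivable (@ln R) (\det (X t)) 1 := @ex_derive _ _ _ _ _ _ _ hl.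
have := derive1_comp d1 d2; rewrite /comp => ->.
by rewrite !derive1E !derive_val.
Qed.
End Der.

Section Main.
Variable R : realType.

Lemma posdef_psd N (H : 'M[R]_N) : posdef H -> forall v, 0 <= qf H v v.
Proof.
move=> [_ hp] v; have [->|vn0] := eqVneq v 0; first by rewrite /qf mulmx0 mxE.
exact: ltW (hp v vn0).
Qed.

Lemma trTT n (W : 'M[R]_n) : \tr (W^T *m W) = \sum_i \sum_j W j i ^+ 2.
Proof.
rewrite /mxtrace; apply: eq_bigr => i _; rewrite mxE; apply: eq_bigr => j _.
by rewrite mxE expr2.
Qed.

Lemma trTT_ge0 n (W : 'M[R]_n) : 0 <= \tr (W^T *m W).
Proof. by rewrite trTT; apply: sumr_ge0 => i _; apply: sumr_ge0 => j _; apply: sqr_ge0. Qed.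

Lemma trTT_eq0 n (W : 'M[R]_n) : \tr (W^T *m W) = 0 -> W = 0.
Proof.
rewrite trTT => h; apply/matrixP => j i; rewrite mxE.
have h1 := psumr_eq0P (fun i _ => sumr_ge0 _ (fun j _ => sqr_ge0 (W j i))) h.
have h2 := psumr_eq0P (fun j _ => sqr_ge0 (W j i)) (h1 i isT).
by apply/eqP; rewrite -sqrf_eq0 h2.
Qed.

Lemma unvec n (v : 'cV[R]_(n * n)) : exists V : 'M[R]_n, vec V = v.
Proof.
exists (\matrix_(i, j) v (vidx i j) 0); apply/matrixP => k z.
by rewrite !mxE vidxK (ord1 z).
Qed.

Lemma G_pd n (Xt L : 'M[R]_n) : Xt = L *m L^T -> L \in unitmx ->
  posdef (kron Xt Xt).
Proof.
move=> hL hLu.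
have hXs : Xt^T = Xt by rewrite hL trmx_mul trmxK.
split; first by rewrite kron_tr hXs.
move=> v vn0; have [V hV] := unvec v.
have e : qf (kron Xt Xt) v v = \tr ((L^T *m V *m L)^T *m (L^T *m V *m L)).
  rewrite /qf -mulmxA -hV kron_vec vec_dot hXs hL.
  rewrite !trmx_mul !trmxK !mulmxA mxtrace_mulC !mulmxA.
  by [].
change (0 < qf (kron Xt Xt) v v); rewrite e lt_neqAle trTT_ge0 andbT eq_sym; apply/eqP => /trTT_eq0 hW.
move/eqP: vn0; apply; rewrite -hV.
have -> : V = invmx L^T *m (L^T *m V *m L) *m invmx L.
  by rewrite !mulmxA mulVmx ?unitmx_tr // mul1mx mulmxK.
by rewrite hW mulmx0 mul0mx; apply/matrixP => k z; rewrite !mxE.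
Qed.

Lemma M_unit N m (G : 'M[R]_N) (cA : 'M[R]_(m, N)) : posdef G ->
  (forall y : 'cV[R]_m, cA^T *m y = 0 -> y = 0) -> cA *m G *m cA^T \in unitmx.
Proof.
move=> hG hinj; rewrite unitmxE unitfE; apply/negP => /det0P [y yn0 hy].
have hz : cA^T *m y^T = 0.
  apply/eqP; apply: contraT => zn0; have := hG.2 _ zn0.
  rewrite !mulmxA in hy; rewrite trmx_mul !trmxK !mulmxA hy mul0mx mxE ltxx //.
by move: yn0; rewrite -trmx_eq0 (hinj _ hz) eqxx.
Qed.

Lemma lin_inj m n (A : 'I_m -> 'M[R]_n) :
  (forall c : 'I_m -> R, \sum_(l < m) c l *: A l = 0 -> forall l, c l = 0) ->
  forall y : 'cV[R]_m, (calA A)^T *m y = 0 -> y = 0.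
Proof.
move=> hind y hy; apply/matrixP => l z; rewrite (ord1 z) [RHS]mxE.
apply: (hind (fun l => y l 0)); apply/matrixP => i j.
have := congr1 (fun M : 'cV[R]_(n * n) => M (vidx i j) 0) hy; rewrite !mxE => <-.
rewrite summxE; apply: eq_bigr => k _.
by rewrite !mxE vrow_vidx vcol_vidx mulrC.
Qed.

Lemma H_props N m (G : 'M[R]_N) (cA : 'M[R]_(m, N)) : posdef G ->
  cA *m G *m cA^T \in unitmx ->
  let H := G - G *m cA^T *m invmx (cA *m G *m cA^T) *m cA *m G in
  H^T = H /\ forall v, 0 <= qf H v v /\ qf H v v <= qf G v v.
Proof.
move=> hG hMu H.
set M := cA *m G *m cA^T in hMu H *. set Mi := invmx M in H *.
have hGs := hG.1.
have hMs : M^T = M by rewrite /M !trmx_mul trmxK hGs mulmxA.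
have hMis : Mi^T = Mi by rewrite /Mi trmx_inv hMs.
have hMMi : M *m Mi = 1%:M by rewrite /Mi mulmxV.
split.
  by rewrite /H linearB /= !trmx_mul !trmxK hGs hMis !mulmxA.
move=> v; pose y := Mi *m cA *m G *m v.
have hcH : cA *m H = 0.
  rewrite /H mulmxBr !mulmxA.
  have -> : cA *m G *m cA^T *m Mi = 1%:M by rewrite -/M hMMi.
  by rewrite mul1mx subrr.
pose w := v - cA^T *m y.
have hGw : G *m w = H *m v.
  by rewrite /w /y /H mulmxBr mulmxBl !mulmxA.
have eA : qf H v v = qf G w w.
  have hwT : w^T = v^T - (cA^T *m y)^T by rewrite /w linearB.
  rewrite /qf -[w^T *m G *m w]mulmxA hGw mulmxA hwT.
  rewrite mulmxBl mulmxBl trmx_mul trmxK.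
  by rewrite -(mulmxA y^T cA H) hcH mulmx0 mul0mx subr0.
pose z := cA^T *m y.
have eB : v^T *m G *m v - v^T *m H *m v = z^T *m G *m z.
  have -> : z^T *m G *m z = v^T *m G *m cA^T *m Mi *m (M *m Mi) *m cA *m G *m v.
    by rewrite /z /y !trmx_mul !trmxK hGs hMis /M !mulmxA.
  rewrite hMMi mulmx1 /H mulmxBr mulmxBl opprB addrC subrK.
  by rewrite !mulmxA.
have eB' : qf G v v - qf H v v = qf G z z.
  have subE (A B : 'M[R]_1) : (A - B) 0 0 = A 0 0 - B 0 0 by rewrite !mxE.
  by rewrite /qf -eB subE.
split; first by rewrite eA; apply: posdef_psd.
have := posdef_psd hG z; rewrite -eB'; lra.
Qed.
Lemma trCX_bound n (C L : 'M[R]_n) : posdef C ->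
  0 <= \tr (C *m (L *m L^T)) /\
  \tr (C *m (L *m L^T) *m C *m (L *m L^T)) <= \tr (C *m (L *m L^T)) ^+ 2.
Proof.
move=> hC; pose K := L^T *m C *m L.
have hK : K^T = K by rewrite /K !trmx_mul trmxK hC.1 mulmxA.
have hKp : forall v, 0 <= qf K v v.
  move=> v; have := posdef_psd hC (L *m v).
  by rewrite /qf /K trmx_mul !mulmxA.
have e1 : \tr (C *m (L *m L^T)) = \tr K.
  by rewrite /K mulmxA mxtrace_mulC mulmxA.
have e2 : \tr (C *m (L *m L^T) *m C *m (L *m L^T)) = \tr (K *m K).
  by rewrite /K !mulmxA mxtrace_mulC !mulmxA.
have hKii : forall i, 0 <= K i i by move=> i; have := hKp (delta_mx i (0 : 'I_1)); rewrite /qf delta_qf.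
rewrite e1 e2; split; first by rewrite /mxtrace; apply: sumr_ge0.
rewrite /mxtrace expr2 mulr_suml; apply: ler_sum => i _; rewrite mxE mulr_sumr.
apply: ler_sum => j _.
have hji : K j i = K i j by rewrite -[in LHS]hK mxE.
rewrite hji -expr2.
have := qf_cs (delta_mx i (0 : 'I_1)) (delta_mx j (0 : 'I_1)) hK hKp.
by rewrite /qf !delta_qf.
Qed.
End Main.

Unset Implicit Arguments.

Theorem lemma5p1 (R : realType) (m n : nat) (C : 'M[R]_n) (A : 'I_m -> 'M[R]_n)
  (X : R -> 'M[R]_n) (t : R) :
  C^T = C ->
  (forall l, (A l)^T = A l) ->
  posdef C ->
  (forall c : 'I_m -> R, \sum_(l < m) c l *: A l = 0 -> forall l, c l = 0) ->
  mxderivable X t ->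
  vec (mxderiv X t) = ansatz2_rhs C A (X t) ->
  posdef (X t) ->
  derive1 (fun s => ln (\det (X s))) t >= - Num.sqrt (n%:R) * \tr (C *m X t).
Proof.
move=> hCs hAs hC hind hX hdyn hXpd.
have [L hL] := cholesky hXpd.
have hXs : (X t)^T = X t := hXpd.1.
have hXu : X t \in unitmx.
  rewrite unitmxE unitfE; apply/negP => /det0P [v vn0 hv].
  have := hXpd.2 (v^T); rewrite trmx_eq0 trmxK hv mul0mx mxE ltxx.
  by move=> /(_ vn0).
have hLn0 : \det L != 0.
  by move: hXu; rewrite unitmxE hL det_mulmx det_tr unitrM andbb unitfE.
have hdet : 0 < \det (X t).
  by rewrite hL det_mulmx det_tr lt_neqAle eq_sym mulf_neq0 //= -expr2 sqr_ge0.
rewrite derive_lndet //.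
have e1 : (\det (X t))^-1 * \tr (mxderiv X t *m \adj (X t)) =
    \tr (invmx (X t) *m mxderiv X t).
  by rewrite -mxtraceZ scalemxAr /invmx hXu mxtrace_mulC.
rewrite e1.
set Z := invmx (X t).
have hZs : Z^T = Z by rewrite /Z trmx_inv hXs.
rewrite -[in X in _ <= X]hZs -vec_dot hdyn /ansatz2_rhs.
set Xt := X t in hL hXs hXu hLn0 hdet Z hZs *.
set G := kron Xt Xt. set cA := calA A.
have hLu : L \in unitmx by rewrite unitmxE unitfE.
have hGpd : posdef G := G_pd hL hLu.
have hMu := M_unit hGpd (lin_inj hind).
pose H := G - G *m cA^T *m invmx (cA *m G *m cA^T) *m cA *m G.
have [hHs hHb] : H^T = H /\ forall v, 0 <= qf H v v /\ qf H v v <= qf G v v :=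
  H_props hGpd hMu.
have -> : (1%:M - G *m cA^T *m invmx (cA *m G *m cA^T) *m cA) *m G *m vec C = H *m vec C.
  by rewrite mulmxBl mul1mx ?mulmxA.
rewrite mulmxN mxE mulNr lerN2 mulmxA.
change (qf H (vec Z) (vec C) <= Num.sqrt n%:R * \tr (C *m Xt)).
have hGu : qf G (vec Z) (vec Z) = n%:R.
  rewrite /qf -mulmxA /G kron_vec hXs vec_dot hZs.
  by rewrite /Z mulmxV // mul1mx mulVmx // mxtrace1.
have hGc : qf G (vec C) (vec C) = \tr (C *m Xt *m C *m Xt).
  by rewrite /qf -mulmxA /G kron_vec hXs vec_dot hCs !mulmxA.
have [hT hTT] := trCX_bound L hC; rewrite -hL in hT hTT.
have hcs := qf_cs (vec Z) (vec C) hHs (fun v => (hHb v).1).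
have [ha0 ha1] := hHb (vec Z); have [hd0 hd1] := hHb (vec C).
rewrite hGu in ha1; rewrite hGc in hd1.
set b := qf H (vec Z) (vec C) in hcs *.
set T := \tr (C *m Xt) in hT hTT *.
have hn0 : 0 <= (n%:R : R) by [].
have hs : Num.sqrt (n%:R : R) ^+ 2 = n%:R by rewrite sqr_sqrtr.
have hs0 : 0 <= Num.sqrt (n%:R : R) by apply: sqrtr_ge0.
set sn := Num.sqrt (n%:R : R) in hs hs0 *.
set a := qf H (vec Z) (vec Z) in ha0 ha1 hcs.
set d := qf H (vec C) (vec C) in hd0 hd1 hcs.
have h1 : a * d <= n%:R * T ^+ 2 by apply: ler_pM => //; apply: le_trans hTT.
rewrite -hs -exprMn in h1.
have hb : b ^+ 2 <= (sn * T) ^+ 2 by apply: le_trans h1.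
have hst : 0 <= sn * T by apply: mulr_ge0.
move: hb hst; set y := sn * T; move=> hb hst.
nra.
Qed.
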